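(* Let $\mathscr{G}$ be a graph class of asymptotic dimension at most $d$ with $d$-dimensional control function $f$. For every $G\in\mathscr{G}$ with $n$ vertices and every integer $r\ge1$, there exist sets $C_0,C_1,\dots,C_d\subseteq V(G)$ with $C_0\cup\dots\cup C_d=V(G)$ such that (i) for every $i$, every connected component of $G^r[C_i]$ has weak diameter in $G$ at most $f(3r)+2r$, and (ii) for every $i\in\{0,\dots,d\}$, $|C_i|\ge\lfloor n/(d+1)\rfloor$.
   Context: $G^r$ is the graph on $V(G)$ in which two vertices are adjacent iff their distance in $G$ is at most $r$. The weak diameter in $G$ of $Z\subseteq V(G)$ is the maximum $G$-distance between two vertices of $Z$. A class $\mathscr{G}$ has asymptotic dimension at most $d$ with $d$-dimensional control function $f:\mathbb{N}\to\mathbb{N}$ if for every $G\in\mathscr{G}$ and integer $r\ge1$ the vertices of $G$ can be coloured with $d+1$ colours so that any two vertices in the same connected component of the subgraph of $G^r$ induced by one colour class are at distance at most $f(r)$ in $G$. *)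

(* Defs.v *)
(* A (finite simple) graph is a symmetric irreflexive
   relation e : rel T on a finType T; V(G) = T. *)
From mathcomp Require Import all_boot.
Set Implicit Arguments. Unset Strict Implicit. Unset Printing Implicit Defensive.

Definition dist_le (T : finType) (e : rel T) (k : nat) (x y : T) : Prop :=
  exists p : seq T, [/\ path e x p, last x p = y & size p <= k].

(* x and y lie in the same connected component of G^r[C]: there is a
   sequence of vertices of C from x to y, consecutive ones at G-distance
   at most r. *)
Definition same_comp_pow (T : finType) (e : rel T) (r : nat) (C : {set T})
    (x y : T) : Prop :=
  exists p : seq T,
    [/\ x \in C, all (fun z => z \in C) p, last x p = y &
        forall i, i < size p -> dist_le e r (nth x (x :: p) i) (nth x p i)].

Definition graph_class := forall T : finType, rel T -> Prop.

Definition asdim_le (cls : graph_class) (d : nat) (f : nat -> nat) : Prop :=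
  forall (T : finType) (e : rel T), cls T e ->
  forall r : nat, 1 <= r ->
  exists c : T -> 'I_d.+1,
    forall x y : T, c x = c y ->
      same_comp_pow e r [set z | c z == c x] x y -> dist_le e (f r) x y.

(* Main.v *)
Require Import Defs.
From mathcomp Require Import all_boot zify.
From Stdlib Require Import ClassicalEpsilon.
Set Implicit Arguments. Unset Strict Implicit.

Section S.
Variables (T : finType) (e : rel T).

Lemma dl_refl k x : dist_le e k x x.
Proof. by exists [::]. Qed.

Lemma dl_mono k k' x y : k <= k' -> dist_le e k x y -> dist_le e k' x y.
Proof. move=> h [p [P L S]]; exists p; split=> //; lia. Qed.

Lemma dl_trans k k' x y z : dist_le e k x y -> dist_le e k' y z -> dist_le e (k + k') x z.
Proof.
move=> [p [P L S]] [q [Q M R]]; exists (p ++ q); rewrite cat_path last_cat L P Q size_cat.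
split=> //; lia.
Qed.

Lemma last_rev_belast (x : T) p : last (last x p) (rev (belast x p)) = x.
Proof.
elim: p x => //= y p IH x; by rewrite rev_cons last_rcons.
Qed.

Lemma dl_sym k x y : symmetric e -> dist_le e k x y -> dist_le e k y x.
Proof.
move=> sy [p [P L S]]; exists (rev (belast x p)); subst y.
rewrite last_rev_belast size_rev size_belast; split=> //.
rewrite rev_path; apply: sub_path P => a b; by rewrite sy.
Qed.

Inductive rt (R : T -> T -> Prop) : T -> T -> Prop :=
 | rt_refl x : rt R x x
 | rt_step x y z : R x y -> rt R y z -> rt R x z.

Lemma rt_trans R x y z : rt R x y -> rt R y z -> rt R x z.
Proof. elim=> // a b c h _ IH /IH; exact: rt_step. Qed.

Lemma rt_sym R x y : (forall a b, R a b -> R b a) -> rt R x y -> rt R y x.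
Proof.
move=> sy; elim=> [a|a b c h _ IH]; first exact: rt_refl.
apply: rt_trans IH _; apply: rt_step (sy _ _ h) (rt_refl _ _).
Qed.

Lemma rt_map R R' (g : T -> T) x y : (forall a b, R a b -> R' (g a) (g b)) ->
  rt R x y -> rt R' (g x) (g y).
Proof.
move=> H; elim=> [a|a b c h _ IH]; first exact: rt_refl.
exact: rt_step (H _ _ h) IH.
Qed.

Definition Rr r (C : {set T}) a b := [/\ a \in C, b \in C & dist_le e r a b].

Lemma scp_rt r C x y : same_comp_pow e r C x y -> rt (Rr r C) x y.
Proof.
move=> [p [xC pC L H]]; elim: p x xC pC L H => [|z p IH] x xC /=.
  by move=> _ <- _; exact: rt_refl.
move=> /andP[zC pC] L H; apply: rt_step (IH z zC pC L _).
  by split=> //; exact: (H 0).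
move=> i lt; have := H i.+1 lt; rewrite /=.
rewrite (set_nth_default z x lt) (set_nth_default z x (_ : i < size (z :: p))) //; exact: ltnW.
Qed.

Lemma scp_cons r (C : {set T}) x y z : x \in C -> dist_le e r x y ->
  same_comp_pow e r C y z -> same_comp_pow e r C x z.
Proof.
move=> xC d [p [yC pC L H]]; exists (y :: p); split=> //=; first by rewrite yC.
case=> [|i] //= lt; rewrite (set_nth_default y x lt) (set_nth_default y x (_ : i < size (y :: p))) //; last exact: ltnW.
exact: H.
Qed.

Lemma rt_mem r S x y : rt (Rr r S) x y -> x \in S -> y \in S.
Proof. by elim=> // a b c [_ bS _] _ IH _; apply: IH. Qed.

Lemma good_anchor (sy : symmetric e) d (c : T -> 'I_d.+1) f r
  (H : forall x y, c x = c y -> same_comp_pow e (3*r) [set z | c z == c x] x y ->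
        dist_le e (f (3*r)) x y) (S : {set T}) (a : T -> T) :
 (forall w, w \in S -> dist_le e r w (a w)) ->
 (forall x y, x \in S -> y \in S -> dist_le e r x y ->
      c (a x) = c (a y) /\ dist_le e (3*r) (a x) (a y)) ->
 forall x u v, same_comp_pow e r S x u -> same_comp_pow e r S x v ->
   dist_le e (f (3*r) + 2*r) u v.
Proof.
move=> Ha Hb x u v hu hv.
have xS : x \in S by case: hu => p [].
have ru := scp_rt hu; have rv := scp_rt hv.
have symR : forall a b, Rr r S a b -> Rr r S b a.
  by move=> a0 b0 [h1 h2 h3]; split=> //; exact: dl_sym.
have ruv : rt (Rr r S) u v by apply: rt_trans (rt_sym symR ru) rv.
have uS := rt_mem ru xS; have vS := rt_mem rv xS.
pose R' p q := c p = c q /\ dist_le e (3*r) p q.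
have r' : rt R' (a u) (a v).
  by apply: rt_map ruv => a0 b0 [h1 h2 h3]; apply: Hb.
have key : forall p q, rt R' p q -> c p = c q /\
    same_comp_pow e (3*r) [set z | c z == c p] p q.
  move=> p q; elim=> [p0|p0 q0 z0 [cp dp] _ [cq sq]].
    split=> //; exists [::]; split=> //; by rewrite inE.
  split; first by rewrite cp.
  apply: scp_cons dp _; first by rewrite inE.
  by rewrite cp.
have [cuv suv] := key _ _ r'.
have dd := H _ _ cuv suv.
apply: (@dl_mono (r + (f (3*r) + r))); first lia.
apply: dl_trans (Ha _ uS) (dl_trans dd _).
exact: dl_sym (Ha _ vS).
Qed.
End S.

Definition pb (P : Prop) : bool := if excluded_middle_informative P then true else false.
Lemma pbP (P : Prop) : pb P <-> P.
Proof. rewrite /pb; case: excluded_middle_informative => //. Qed.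

Lemma cnt (T : finType) d (c : T -> 'I_d.+1) (N : {set T}) :
  #|~: N| = \sum_(j : 'I_d.+1) #|[set z | c z == j] :\: N|.
Proof.
rewrite -sum1_card (partition_big c xpredT) //=.
apply: eq_bigr => j _; rewrite -sum1_card; apply: eq_bigl => x.
by rewrite !inE andbC.
Qed.

Lemma sum_bound d (i : 'I_d.+1) (g : 'I_d.+1 -> nat) m :
  g i = 0 -> (forall j, j != i -> g j <= m) -> \sum_j g j <= d * m.
Proof.
move=> gi hj; rewrite (bigD1 i) //= gi add0n.
apply: (@leq_trans (\sum_(j | j != i) m)); first by apply: leq_sum => j /hj.
have -> : \sum_(j | j != i) m = \sum_(j in [pred j | j != i]) m by [].
by rewrite sum_nat_const cardC1 card_ord.
Qed.

Theorem mainTheorem13 (cls : graph_class) (d : nat) (f : nat -> nat) :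
  asdim_le cls d f ->
  forall (T : finType) (e : rel T), cls T e -> symmetric e -> irreflexive e ->
  forall r : nat, 1 <= r ->
  exists C : 'I_d.+1 -> {set T},
    [/\ (forall x : T, exists i, x \in C i),
        (forall (i : 'I_d.+1) (x u v : T), same_comp_pow e r (C i) x u ->
             same_comp_pow e r (C i) x v -> dist_le e (f (3 * r) + 2 * r) u v) &
        (forall i : 'I_d.+1, #|T| %/ d.+1 <= #|C i|)].
Proof.
move=> As T e cl sy irr r r1.
have [c Hc] := As T e cl (3*r) (ltac:(lia)).
set q := #|T| %/ d.+1.
pose A k := [set z | c z == k].
pose N i := [set x | pb (exists b, c b = i /\ dist_le e r x b)].
have claim : forall i, exists S : {set T}, [/\ forall x, c x = i -> x \in S,
   (forall x u v, same_comp_pow e r S x u -> same_comp_pow e r S x v ->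
       dist_le e (f (3 * r) + 2 * r) u v) & q <= #|S|].
  move=> i.
  case: (leqP q #|N i|) => hq.
    have ha : forall x, exists b, x \in N i -> c b = i /\ dist_le e r x b.
      move=> x; case: (boolP (x \in N i)) => xN; last by exists x.
      move: xN; rewrite inE => /pbP [b hb]; by exists b.
    have [a Ha] := fin_all_exists ha.
    exists (N i); split=> //.
      by move=> x cx; rewrite inE; apply/pbP; exists x; split=> //; exact: dl_refl.
    apply: (good_anchor sy Hc (a := a)).
      by move=> w /Ha [].
    move=> x y /Ha [cx dx] /Ha [cy dy] dxy; split; first by rewrite cx cy.
    apply: (@dl_mono _ _ (r + (r + r))); first lia.
    exact: dl_trans (dl_sym sy dx) (dl_trans dxy dy).
  have ex : exists j, q <= #|A j :\: N i|.
    case: (boolP [exists j, q <= #|A j :\: N i|]) => [/existsP //|/existsPn hn].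
    exfalso.
    have hs := cnt c (N i).
    have hb : \sum_j #|A j :\: N i| <= d * q.-1.
      apply: (sum_bound (i := i)).
        apply/eqP; rewrite cards_eq0; apply/eqP/setP => x; rewrite !inE.
        case: (boolP (c x == i)) => [/eqP cx|]; last by rewrite andbF.
        rewrite andbT; apply: negbF.
        by apply/pbP; exists x; split=> //; exact: dl_refl.
      move=> j _; have := hn j; rewrite -ltnNge; lia.
    have h1 := cardsC (N i).
    have h2 : q * d.+1 <= #|T| by exact: leq_trunc_div.
    have hs2 : #|~: N i| <= d * q.-1 by rewrite hs; exact: hb.
    move: hs2 h1 h2 hq; clear hn hb hs; clearbody q; move: #|~: N i| #|N i| #|T| => a b n.
    case: q => [|m] /=; nia.
  have [j hj] := ex.
  exists (A i :|: (A j :\: N i)); split.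
  - by move=> x cx; rewrite !inE cx eqxx.
  - apply: (good_anchor sy Hc (a := id)).
      by move=> w _; exact: dl_refl.
    move=> x y; rewrite !inE => hx hy dxy; split; last first.
      apply: dl_mono dxy; lia.
    have nf : forall u v, c u = i -> c v = j -> ~~ pb (exists b, c b = i /\ dist_le e r v b) ->
       dist_le e r u v -> False.
      move=> u v cu cv /negP nv duv; apply: nv; apply/pbP; exists u; split=> //.
      exact: dl_sym.
    case/orP: hx => [/eqP cx|/andP[nx /eqP cx]]; case/orP: hy => [/eqP cy|/andP[ny /eqP cy]] /=.
    + by rewrite cx cy.
    + by case: (nf _ _ cx cy ny dxy).
    + by case: (nf _ _ cy cx nx (dl_sym sy dxy)).
    + by rewrite cx cy.
  - apply: leq_trans hj _; apply: subset_leq_card; exact: subsetUr.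
have [C HC] := fin_all_exists claim.
exists C; split.
- by move=> x; exists (c x); case: (HC (c x)) => h _ _; exact: h.
- by move=> i; case: (HC i) => _ h _; exact: h.
- by move=> i; case: (HC i).
Qed.
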